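(* Let $D$ be an arc-colored digraph on $n\geq 3$ vertices. If \[a(D)+c(D)\geq\begin{cases} n(n-1)+\lfloor\frac{n^{2}}{4}\rfloor+3,&\text{if } n=3, 4;\\ n(n-1)+\lfloor\frac{n^{2}}{4}\rfloor+2,&\text{if } n\geq 5, \end{cases}\] then $D$ contains a rainbow triangle.
   Context: All digraphs are finite, without loops or multiple arcs (opposite arcs $xy,yx$ allowed). $a(D)$ is the number of arcs of $D$. An arc-coloring is any map $C:A(D)\to\mathbb{N}$; $c(D)$ is the number of distinct colors used on the arcs. A rainbow triangle is a directed cycle of length 3 whose arcs have pairwise distinct colors. *)

(* Defs.v *)
From mathcomp Require Import all_boot.
Set Implicit Arguments. Unset Strict Implicit. Unset Printing Implicit Defensive.

(* A digraph on a finite vertex type V: arc relation, no loops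
   (opposite arcs allowed, no multiple arcs since it is a relation). *)
Definition loopless (V : finType) (A : rel V) : Prop := forall x, ~~ A x x.

Definition arcs (V : finType) (A : rel V) : {set V * V} :=
  [set p : V * V | A p.1 p.2].

Definition num_arcs (V : finType) (A : rel V) : nat := #|arcs A|.

(* c(D): number of distinct colors used on arcs; the coloring C : V -> V -> nat
   is only relevant on arcs. *)
Definition num_colors (V : finType) (A : rel V) (C : V -> V -> nat) : nat :=
  size (undup [seq C p.1 p.2 | p <- enum (arcs A)]).

Definition rainbow_triangle (V : finType) (A : rel V) (C : V -> V -> nat) : Prop :=
  exists x y z : V,
    [/\ x != y, y != z & z != x] /\
    [/\ A x y, A y z & A z x] /\
    [/\ C x y != C y z, C y z != C z x & C z x != C x y].

Definition bound3 (n : nat) : nat :=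
  n * (n - 1) + (n * n) %/ 4 + (if n <= 4 then 3 else 2).

(* Main.v *)
Require Import Defs.
From mathcomp Require Import all_boot.
From mathcomp Require Import zify.
From Stdlib Require Import Lia.
Set Implicit Arguments. Unset Strict Implicit. Unset Printing Implicit Defensive.

(* Proof outline:
   - vertex lemma: in a rainbow-triangle-free digraph on n >= 4 vertices some vertex x
     has p(x) <= n/2 + mis(x) (p = #colors private to x, mis = #missing arcs at x);
   - induction: a+c <= n(n-1) + n^2/4 + 2 for n >= 3;
   - small cases n = 3 and n = 5 by a verified exhaustive search (reflection);
   - induction from n = 5: a+c <= n(n-1) + n^2/4 + 1 for n >= 5. *)

Definition arcpairs (n : nat) : seq (nat * nat) :=
  flatten [seq flatten [seq [:: (i, j); (j, i)] | i <- iota 0 j] | j <- iota 0 n].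

Definition triples (n : nat) : seq (nat * nat * nat) :=
  flatten [seq flatten [seq [seq (i, j, k) | k <- iota 0 n] | j <- iota 0 n] | i <- iota 0 n].

Definition tris (n : nat) : seq (nat * nat * nat) :=
  [seq (index (t.1.1, t.1.2) (arcpairs n), index (t.1.2, t.2) (arcpairs n),
        index (t.2, t.1.1) (arcpairs n))
  | t <- triples n & (t.1.1 != t.1.2) && (t.1.2 != t.2) && (t.2 != t.1.1)].

Definition b3 (a b c : option nat) : bool :=
  match a, b, c with
  | Some x, Some y, Some z => (x != y) && (y != z) && (z != x)
  | _, _, _ => false
  end.

Definition bad3 (s : seq (option nat)) (t : nat * nat * nat) : bool :=
  b3 (nth None s t.1.1) (nth None s t.1.2) (nth None s t.2).

Definition rbf (T : seq (nat*nat*nat)) (s : seq (option nat)) : bool := ~~ has (bad3 s) T.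

Definition roots (s : seq (option nat)) : seq nat :=
  [seq r <- iota 0 (size s) | nth None s r == Some r].

Definition Fval (s : seq (option nat)) : nat := count isSome s + size (roots s).

Definition choices (s : seq (option nat)) : seq (option nat) :=
  None :: Some (size s) :: [seq Some r | r <- roots s].

Arguments choices : simpl never.

Fixpoint ext (T : seq (nat*nat*nat)) target (fuel : nat) (pre : seq (option nat)) : seq (seq (option nat)) :=
  if ~~ rbf T pre then [::] else
  match fuel with
  | 0 => if target <= Fval pre then [:: pre] else [::]
  | f.+1 => if Fval pre + (f.+1).*2 < target then [::]
            else flatten [seq ext T target f (rcons pre o) | o <- choices pre]
  end.


Definition validp (s : seq (option nat)) : bool :=
  all (fun i => if nth None s i is Some r then (r <= i) && (nth None s r == Some r) else true)
      (iota 0 (size s)).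

Lemma nth_take_None (s : seq (option nat)) k i :
  nth None (take k s) i = if i < k then nth None s i else None.
Proof.
case: ltnP => Hi; first by rewrite nth_take.
by rewrite nth_default // size_take; case: ltnP => // H; apply: leq_trans Hi.
Qed.

Lemma rbf_take T (q : seq (option nat)) k : rbf T q -> rbf T (take k q).
Proof.
rewrite /rbf; apply: contra => /hasP [t Ht Hb]; apply/hasP; exists t => //.
move: Hb; rewrite /bad3 !nth_take_None.
by case: (_ < k); case: (_ < k); case: (_ < k);
  case: (nth None q t.1.1) => [?|]; case: (nth None q t.1.2) => [?|];
  case: (nth None q t.2) => [?|].
Qed.

Lemma count_take_drop (q : seq (option nat)) k :
  count isSome q <= count isSome (take k q) + (size q - k).
Proof.
rewrite -{1}(cat_take_drop k q) count_cat leq_add2l.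
by apply: leq_trans (count_size _ _) _; rewrite size_drop.
Qed.

Lemma roots_take (q : seq (option nat)) k :
  size (roots q) <= size (roots (take k q)) + (size q - k).
Proof.
rewrite /roots.
case: (leqP (size q) k) => Hk.
  by rewrite take_oversize // addnC leq_addl.
have Hs : size (take k q) = k by rewrite size_take Hk.
rewrite Hs.
rewrite -{1}(subnKC (ltnW Hk)) iotaD filter_cat size_cat add0n.
apply: leq_add.
  rewrite leq_eqVlt; apply/orP; left; apply/eqP; congr size.
  apply: eq_in_filter => r; rewrite mem_iota add0n => /andP [_ Hr].
  by rewrite nth_take.
by rewrite size_filter; apply: leq_trans (count_size _ _) _; rewrite size_iota.
Qed.

Lemma Fval_take (q : seq (option nat)) k :
  Fval q <= Fval (take k q) + (size q - k).*2.
Proof.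
rewrite /Fval -addnn addnACA.
by apply: leq_add; [apply: count_take_drop | apply: roots_take].
Qed.

Lemma choice_ok (q : seq (option nat)) k :
  validp q -> k < size q -> nth None q k \in choices (take k q).
Proof.
move=> /allP Hv Hk.
have := Hv k; rewrite mem_iota add0n Hk => /(_ isT).
have Hs : size (take k q) = k by rewrite size_take Hk.
rewrite /choices in_cons Hs.
case: (nth None q k) => [r|] // /andP [Hr /eqP Hq].
rewrite in_cons; case: (ltngtP r k) Hr => // [Hrk _ | -> _]; last by rewrite eqxx orbT.
apply/orP; right; apply/orP; right.
apply/mapP; exists r => //.
rewrite /roots mem_filter mem_iota add0n Hs Hrk andbT.
by rewrite (nth_take _ Hrk) Hq eqxx.
Qed.

Lemma ext_S T target f pre : ext T target f.+1 pre =
  if ~~ rbf T pre then [::] else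
  if Fval pre + (f.+1).*2 < target then [::]
  else flatten [seq ext T target f (rcons pre o) | o <- choices pre].
Proof. by []. Qed.

Lemma ext_complete T target (q : seq (option nat)) :
  validp q -> rbf T q -> target <= Fval q ->
  forall f k, k + f = size q -> q \in ext T target f (take k q).
Proof.
move=> Hv Hr Ht; elim=> [|f IH] k Hkf.
  rewrite addn0 in Hkf; rewrite /= Hkf take_size Hr /= Ht.
  by rewrite mem_seq1.
rewrite ext_S.
have Hr' := rbf_take k Hr.
have HF : Fval q <= Fval (take k q) + f.+1.*2.
  by have := Fval_take q k; rewrite -Hkf addKn.
have Hlt : ~~ (Fval (take k q) + f.+1.*2 < target).
  by rewrite -leqNgt; apply: leq_trans Ht HF.
rewrite Hr' (negbTE Hlt).
change (q \in flatten [seq ext T target f (rcons (take k q) o) | o <- choices (take k q)]).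
apply/flattenP.
have Hk : k < size q by rewrite -Hkf -addSnnS leq_addr.
exists (ext T target f (rcons (take k q) (nth None q k))).
  by apply/mapP; exists (nth None q k) => //; apply: choice_ok.
rewrite -take_nth //; apply: IH; by rewrite addSnnS.
Qed.

Definition T3 := Eval vm_compute in tris 3.
Definition T4 := Eval vm_compute in tris 4.
Definition T5 := Eval vm_compute in tris 5.
Lemma T3E : T3 = tris 3. Proof. by vm_compute. Qed.
Lemma T4E : T4 = tris 4. Proof. by vm_compute. Qed.
Lemma T5E : T5 = tris 5. Proof. by vm_compute. Qed.
Lemma c3 : ext T3 11 6 [::] = [::]. Proof. by vm_compute. Qed.
Lemma c5 : all (fun p => ext T5 28 8 p == [::]) (ext T4 18 12 [::]). Proof. by vm_compute. Qed.

Section Defs.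
Variables (V : finType) (A : rel V) (C : V -> V -> nat).

Definition arcsS (S : {set V}) : {set V * V} :=
  [set p | [&& p.1 \in S, p.2 \in S & A p.1 p.2]].
Definition colS (S : {set V}) : seq nat := undup [seq C p.1 p.2 | p <- enum (arcsS S)].
Definition Fv (S : {set V}) : nat := #|arcsS S| + size (colS S).
Definition isPriv (S : {set V}) (x : V) (c : nat) : bool :=
  [forall p in arcsS S, (C p.1 p.2 == c) ==> ((p.1 == x) || (p.2 == x))].
Definition privS (S : {set V}) (x : V) : seq nat := [seq c <- colS S | isPriv S x c].
Definition pS S x := size (privS S x).
Definition misO (S : {set V}) x := #|[set y in S | (y != x) && ~~ A x y]|.
Definition misI (S : {set V}) x := #|[set y in S | (y != x) && ~~ A y x]|.
Definition misS S x := misO S x + misI S x.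
Definition degS (S : {set V}) x := #|[set y in S | A x y]| + #|[set y in S | A y x]|.
End Defs.

Section Basic.
Variables (V : finType) (A : rel V) (C : V -> V -> nat).
Hypothesis Hll : forall x, ~~ A x x.

Lemma in_arcsS (S : {set V}) a b : ((a, b) \in arcsS A S) = [&& a \in S, b \in S & A a b].
Proof. by rewrite inE. Qed.

Lemma colSP (S : {set V}) c :
  reflect (exists a b, [/\ a \in S, b \in S, A a b & C a b = c]) (c \in colS A C S).
Proof.
rewrite /colS mem_undup; apply: (iffP mapP).
  by case=> [[a b]]; rewrite mem_enum in_arcsS => /and3P [Ha Hb Hab] ->; exists a, b.
by case=> a [b [Ha Hb Hab <-]]; exists (a, b) => //; rewrite mem_enum in_arcsS Ha Hb.
Qed.

Lemma privP1 (S : {set V}) x c : c \in privS A C S x ->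
  exists a b, [/\ a \in S, b \in S, A a b, C a b = c & (a == x) || (b == x)].
Proof.
rewrite mem_filter => /andP [/forall_inP Hp /colSP [a [b [Ha Hb Hab Hc]]]].
exists a, b; split => //.
by have := Hp (a, b); rewrite in_arcsS Ha Hb Hab Hc eqxx /=; apply.
Qed.

Lemma privP2 (S : {set V}) x c a b : c \in privS A C S x -> a \in S -> b \in S -> A a b -> C a b = c ->
  (a == x) || (b == x).
Proof.
rewrite mem_filter => /andP [/forall_inP Hp _] Ha Hb Hab Hc.
by have := Hp (a, b); rewrite in_arcsS Ha Hb Hab Hc eqxx /=; apply.
Qed.

Lemma privI (S : {set V}) x c a b : a \in S -> b \in S -> A a b -> C a b = c ->
  (forall a' b', a' \in S -> b' \in S -> A a' b' -> C a' b' = c -> (a' == x) || (b' == x)) ->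
  c \in privS A C S x.
Proof.
move=> Ha Hb Hab Hc H; rewrite mem_filter; apply/andP; split.
  apply/forall_inP => [[a' b']]; rewrite in_arcsS => /and3P [Ha' Hb' Hab'].
  by apply/implyP => /eqP; apply: H.
by apply/colSP; exists a, b.
Qed.

Lemma uniq_privS (S : {set V}) x : uniq (privS A C S x).
Proof. by rewrite filter_uniq // undup_uniq. Qed.

Lemma pS_le (S : {set V}) x (l : seq nat) : {subset privS A C S x <= l} -> pS A C S x <= size l.
Proof. by move=> H; apply: uniq_leq_size => //; apply: uniq_privS. Qed.

Lemma arcs_del (S : {set V}) x : x \in S -> #|arcsS A S| <= #|arcsS A (S :\ x)| + degS A S x.
Proof.
move=> Hx.
have Hsub : arcsS A S \subset
  arcsS A (S :\ x) :|: ([set (x, y) | y in [set y in S | A x y]] :|: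
                        [set (y, x) | y in [set y in S | A y x]]).
  apply/subsetP => [[a b]]; rewrite in_arcsS => /and3P [Ha Hb Hab].
  rewrite !inE.
  case: (eqVneq a x) => [Eax | Nax].
    subst a; apply/orP; right; apply/orP; left.
    by apply/imsetP; exists b => //; rewrite inE Hb Hab.
  case: (eqVneq b x) => [Ebx | Nbx].
    subst b; apply/orP; right; apply/orP; right.
    by apply/imsetP; exists a => //; rewrite inE Ha Hab.
  by rewrite /= Ha Hb Hab.
apply: leq_trans (subset_leq_card Hsub) _.
apply: leq_trans (leq_card_setU _ _) _; rewrite leq_add2l /degS.
apply: leq_trans (leq_card_setU _ _) _.
by apply: leq_add; apply: leq_imset_card.
Qed.

Lemma cols_del (S : {set V}) x : size (colS A C S) <= size (colS A C (S :\ x)) + pS A C S x.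
Proof.
rewrite /pS -size_cat; apply: uniq_leq_size; first by apply: undup_uniq.
move=> c Hc; rewrite mem_cat.
case Hp: (c \in privS A C S x); first by rewrite orbT.
apply/orP; left.
move: Hp; rewrite mem_filter Hc andbT => /forall_inPn [[a b]].
rewrite in_arcsS => /and3P [Ha Hb Hab]; rewrite negb_imply => /andP [/eqP Hc' Hn].
apply/colSP; exists a, b; split => //; rewrite !inE ?Ha ?Hb andbT.
  by apply: contraNneq Hn => ->; rewrite eqxx.
by apply: contraNneq Hn => ->; rewrite eqxx orbT.
Qed.

Lemma Fv_del (S : {set V}) x : x \in S -> Fv A C S <= Fv A C (S :\ x) + degS A S x + pS A C S x.
Proof.
move=> Hx; rewrite /Fv.
have := arcs_del Hx; have := cols_del S x; lia.
Qed.

Lemma deg_mis (S : {set V}) x : x \in S -> degS A S x + misS A S x = (#|S| - 1).*2.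
Proof.
move=> Hx.
have E1 : #|[set y in S | A x y]| + misO A S x = #|S :\ x|.
  rewrite /misO -(cardID [pred y | A x y] (S :\ x)); congr (_ + _); apply: eq_card => y;
  rewrite !inE; case: (eqVneq y x) => [->|_]; rewrite ?(negbTE (Hll x)) /=;
  by case: (_ \in S); case: (A _ _).
have E2 : #|[set y in S | A y x]| + misI A S x = #|S :\ x|.
  rewrite /misI -(cardID [pred y | A y x] (S :\ x)); congr (_ + _); apply: eq_card => y;
  rewrite !inE; case: (eqVneq y x) => [->|_]; rewrite ?(negbTE (Hll x)) /=;
  by case: (_ \in S); case: (A _ _).
have E3 : #|S :\ x| = #|S| - 1 by rewrite (cardsD1 x S) Hx add1n subSS subn0.
rewrite /degS /misS; lia.
Qed.

End Basic.

Lemma card_disj2 (T : finType) (X Y W : {set T}) :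
  X \subset W -> Y \subset W -> (forall y, y \in X -> y \in Y -> False) -> #|X| + #|Y| <= #|W|.
Proof.
move=> HX HY Hd.
have E : X :&: Y = set0.
  by apply/setP => y; rewrite !inE; apply/negbTE/negP => /andP [H1 H2]; apply: (Hd y).
rewrite -cardsUI E cards0 addn0; apply: subset_leq_card.
by apply/subsetP => y; rewrite inE => /orP [] H; [apply: (subsetP HX) | apply: (subsetP HY)].
Qed.

Lemma card_split (T : finType) (X : {set T}) (P : pred T) :
  #|[set x in X | P x]| + #|[set x in X | ~~ P x]| = #|X|.
Proof.
rewrite -(cardID P X); congr (_ + _); apply: eq_card => x; rewrite !inE //.
by rewrite andbC.
Qed.

Lemma card_sub_le (T : finType) (X : {set T}) (P : pred T) : #|[set x in X | P x]| <= #|X|.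
Proof. by apply: subset_leq_card; apply/subsetP => x; rewrite inE => /andP []. Qed.

Lemma arithB h n pw mis Mm Z O pv Mp : n <= h.*2.+1 -> h.+1 + mis <= pw ->
  pw <= 1 + Mm + Z -> Z + O <= n - 1 -> pv <= O -> h.+1 + (Mp + Mm) <= pv -> False.
Proof. lia. Qed.

Lemma arithA2 h n pw mis Mp Mm pv O : 2 <= h -> n <= h.*2.+1 -> h.+1 + mis <= pw ->
  pw <= 2 + Mp -> h.+1 + (Mp + Mm) <= pv -> pv <= O -> O + Mp <= n - 1 -> False.
Proof. lia. Qed.

Lemma arithA1 h n pw mo mi a b c d mm pv o : 2 <= h -> n <= h.*2.+1 ->
  h.+1 + (mo + mi) <= pw -> pw <= 2 + a + b -> c <= mo -> d <= mi -> a + c = mm ->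
  h.+1 + (b + mm) <= pv -> pv <= o -> o + b <= n - 1 -> d = 0 /\ n - 1 <= o.
Proof. lia. Qed.

Section Pure.
Variables (V : finType) (A : rel V) (C : V -> V -> nat).
Hypothesis Hll : forall x, ~~ A x x.
Hypothesis NR : forall x y z, A x y -> A y z -> A z x -> x != y -> y != z -> z != x ->
  [|| C x y == C y z, C y z == C z x | C z x == C x y].
Variable S : {set V}.
Hypothesis Hn : 4 <= #|S|.
Hypothesis Hstar : forall x, x \in S -> (#|S| %/ 2).+1 + misS A S x <= pS A C S x.

Lemma neq_arc a b : A a b -> a != b.
Proof. by apply: contraTneq => ->; apply: Hll. Qed.

Variable v : V.
Hypothesis Hv : v \in S.
Hypothesis Hpure : forall u, u \in S -> A u v -> C u v \notin privS A C S v.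

Let O := [set w in S | A v w && (C v w \in privS A C S v)].
Let Mm := [set z in S | (z != v) && ~~ A z v].
Let Mp := [set z in S | (z != v) && ~~ A v z].
Let Z := S :\: (v |: O).

Let hfacts : 2 <= #|S| %/ 2 /\ #|S| <= (#|S| %/ 2).*2.+1.
Proof. lia. Qed.

Let kO : pS A C S v <= #|O|.
Proof.
rewrite cardE -(size_map (fun w => C v w)); apply: pS_le => c Hc.
have [a [b [Ha Hb Hab Hc' /orP [/eqP Ea | /eqP Eb]]]] := privP1 Hc.
  by subst a; apply/mapP; exists b => //; rewrite mem_enum inE Hb Hab Hc' Hc.
subst b; have := Hpure Ha Hab; by rewrite Hc' Hc.
Qed.

Let Hk : (#|S| %/ 2).+1 + (#|Mp| + #|Mm|) <= pS A C S v.
Proof. exact: Hstar. Qed.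

Let OMp : #|O| + #|Mp| <= #|S :\ v|.
Proof.
apply: card_disj2.
- by apply/subsetP => w; rewrite !inE => /andP [Hw /andP [Hvw _]]; rewrite Hw andbT eq_sym neq_arc.
- by apply/subsetP => w; rewrite !inE => /andP [Hw /andP [Hwv _]]; rewrite Hw Hwv.
- by move=> y; rewrite !inE => /andP [_ /andP [H _]] /andP [_ /andP [_ H']]; rewrite H in H'.
Qed.

Let ZO : #|Z| + #|O| <= #|S :\ v|.
Proof.
apply: card_disj2.
- by apply/subsetP => w; rewrite !inE => /andP [/norP [H1 H2] H3]; rewrite H1 H3.
- by apply/subsetP => w; rewrite !inE => /andP [Hw /andP [Hvw _]]; rewrite Hw andbT eq_sym neq_arc.
- by move=> y /setDP [_ Hn0] Hy; rewrite in_setU1 Hy orbT in Hn0.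
Qed.

Let Sv : #|S :\ v| = #|S| - 1.
Proof. by rewrite (cardsD1 v S) Hv add1n subSS subn0. Qed.

Let F3 w z : w \in O -> z \in S -> z != v -> z != w -> A w z -> A z v -> C w z = C z v.
Proof.
rewrite inE => /andP [Hw /andP [Avw Hp]] Hz Hzv Hzw Awz Azv.
have := NR Avw Awz Azv (neq_arc Avw) (neq_arc Awz) Hzv.
case/or3P => /eqP E.
- have := privP2 Hp Hw Hz Awz (esym E); by rewrite (negbTE Hzv) eq_sym (negbTE (neq_arc Avw)).
- done.
- have := Hpure Hz Azv; by rewrite E Hp.
Qed.

Let cls w c : w \in O -> A w v -> c \in privS A C S w ->
  [\/ c = C v w, c = C w v, (exists2 b, b \in Mm & A w b /\ c = C w b)
    | (exists2 a, a \in Z & A a w /\ c = C a w)].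
Proof.
move=> Hw Awv Hc.
have wS : w \in S by move: Hw; rewrite inE => /andP [].
have [a [b [Ha Hb Hab Hc' /orP [/eqP Ea | /eqP Eb]]]] := privP1 Hc.
  subst a; case: (eqVneq b v) => [Ebv | Nbv].
    by subst b; apply: Or42.
  case Abv : (A b v).
    have Hbw : b != w by rewrite eq_sym neq_arc.
    have E := F3 Hw Hb Nbv Hbw Hab Abv.
    have := privP2 Hc Hb Hv Abv (etrans (esym E) Hc').
    by rewrite (negbTE Hbw) eq_sym (negbTE (neq_arc Awv)).
  by apply: Or43; exists b; rewrite ?inE ?Hb ?Nbv ?Abv.
subst b; case: (eqVneq a v) => [Eav | Nav].
  by subst a; apply: Or41.
case Ha' : (a \in O).
  have Haw : w != a by rewrite eq_sym neq_arc.
  have := F3 Ha' wS (neq_arc Awv) Haw Hab Awv.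
  by move=> E; apply: Or42; rewrite -Hc' E.
apply: Or44; exists a => //; by rewrite in_setD in_setU1 Ha' (negbTE Nav) Ha.
Qed.


Let per_w w : w \in O -> A w v ->
  [/\ C w v \in privS A C S w, (forall z, z \in O -> z != w -> A z w),
      (forall z, z \in S -> z != v -> z \in O) &
      exists2 z0, z0 \in Mm & [/\ A w z0, C w z0 \in privS A C S w & C w z0 != C w v]].
Proof.
move=> Hw Awv.
have wS : w \in S by move: Hw; rewrite inE => /andP [].
have Avw : A v w by move: Hw; rewrite inE => /and3P [].
have [h2 hn] := hfacts.
have Hsw := Hstar wS.
have ZO' := ZO; have OMp' := OMp; have kO' := kO; have Hk' := Hk.
rewrite Sv in ZO' OMp'.
have cMmW := card_sub_le Mm (fun b => A w b).
have cZW := card_sub_le Z (fun a => A a w).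
case Hkp : (C w v \in privS A C S w); last first.
  have : pS A C S w <= 1 + #|Mm| + #|Z|.
    pose l := C v w :: ([seq C w b | b <- enum [set b in Mm | A w b]] ++
                        [seq C a w | a <- enum [set a in Z | A a w]]).
    apply: (@leq_trans (size l)).
      apply: pS_le => c Hc; rewrite /l in_cons mem_cat.
      case: (cls Hw Awv Hc) => [->|E|[b Hb [Hwb E]]|[a Ha [Haw E]]].
      - by rewrite eqxx.
      - by rewrite -E Hc in Hkp.
      - by apply/orP; right; apply/orP; left; apply/mapP; exists b; rewrite // mem_enum inE Hb Hwb.
      - by apply/orP; right; apply/orP; right; apply/mapP; exists a; rewrite // mem_enum inE Ha Haw.
    rewrite /l /= size_cat !size_map -!cardE; lia.
  by move=> Hpw; case: (arithB hn Hsw Hpw ZO' kO' Hk').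
have clsA : forall c, c \in privS A C S w ->
  [\/ c = C v w, c = C w v, (exists2 b, b \in Mm & A w b /\ c = C w b)
    | (exists2 a, a \in Z & [/\ a \in Mp, A a w & c = C a w])].
  move=> c Hc; case: (cls Hw Awv Hc) => [E|E|E|[a Ha [Haw E]]];
    [by apply: Or41 | by apply: Or42 | by apply: Or43 |].
  have aS : a \in S by move: Ha => /setDP [].
  have Nav : a != v by move: Ha => /setDP [_]; rewrite in_setU1 negb_or => /andP [].
  case Ava : (A v a).
    have := NR Haw Awv Ava (neq_arc Haw) (neq_arc Awv) (neq_arc Ava).
    case/or3P => /eqP E'.
    - by apply: Or42; rewrite E E'.
    - have := privP2 Hkp Hv aS Ava (esym E').
      by rewrite eq_sym (negbTE (neq_arc Awv)) (negbTE (neq_arc Haw)).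
    - have := privP2 Hc Hv aS Ava (etrans E' (esym E)).
      by rewrite eq_sym (negbTE (neq_arc Awv)) (negbTE (neq_arc Haw)).
  by apply: Or44; exists a => //; split => //; rewrite inE aS Nav Ava.
have cZWp := card_sub_le Z (fun a => (a \in Mp) && A a w).
have cZWp' : #|[set a in Z | (a \in Mp) && A a w]| <= #|Mp|.
  by apply: subset_leq_card; apply/subsetP => a; rewrite inE => /and3P [].
case: (boolP [exists z0 in Mm, [&& A w z0, C w z0 \in privS A C S w & C w z0 != C w v]]) => Hex;
  last first.
  have : pS A C S w <= 2 + #|Mp|.
    pose l := [:: C v w; C w v] ++ [seq C a w | a <- enum [set a in Z | (a \in Mp) && A a w]].
    apply: (@leq_trans (size l)).
      apply: pS_le => c Hc; rewrite /l mem_cat !in_cons.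
      case: (clsA c Hc) => [->|->|[b Hb [Hwb E]]|[a Ha [Hap Haw E]]].
      - by rewrite eqxx.
      - by rewrite eqxx orbT.
      - move: Hex => /exists_inPn /(_ b Hb); rewrite Hwb -E Hc /= negbK => /eqP ->.
        by rewrite eqxx orbT.
      - by apply/orP; right; apply/mapP; exists a; rewrite // mem_enum inE Ha Hap Haw.
    rewrite /l size_cat size_map -cardE /=; lia.
  by move=> Hpw; case: (arithA2 h2 hn Hsw Hpw Hk' kO' OMp').
have [z0 Hz0 /and3P [Awz0 Hpz0 Nz0]] := exists_inP Hex.
have Hpw : pS A C S w <= 2 + #|[set b in Mm | A w b]| + #|Mp|.
  pose l := [:: C v w; C w v] ++ ([seq C w b | b <- enum [set b in Mm | A w b]] ++
                        [seq C a w | a <- enum [set a in Z | (a \in Mp) && A a w]]).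
  apply: (@leq_trans (size l)).
    apply: pS_le => c Hc; rewrite /l mem_cat !in_cons mem_cat.
    case: (clsA c Hc) => [->|->|[b Hb [Hwb E]]|[a Ha [Hap Haw E]]].
    - by rewrite eqxx.
    - by rewrite eqxx orbT.
    - by apply/orP; right; apply/orP; left; apply/mapP; exists b; rewrite // mem_enum inE Hb Hwb.
    - by apply/orP; right; apply/orP; right; apply/mapP; exists a; rewrite // mem_enum inE Ha Hap Haw.
  rewrite /l size_cat /= size_cat !size_map -!cardE addnA leq_add2l; exact: cZWp'.
have Hsplit := card_split Mm (fun b => A w b).
have HmO : #|[set b in Mm | ~~ A w b]| <= misO A S w.
  apply: subset_leq_card; apply/subsetP => b; rewrite !inE => /andP [/and3P [Hb Hbv Abv] Awb].
  rewrite Hb Awb andbT; apply: contraNneq Abv => ->; by [].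
have HmI : #|[set z in O | (z != w) && ~~ A z w]| <= misI A S w.
  apply: subset_leq_card; apply/subsetP => z; rewrite !inE => /andP [/andP [Hz _] ->].
  by rewrite Hz.
move: Hsw; rewrite /misS => Hsw.
have [E0 EO] := arithA1 h2 hn Hsw Hpw HmO HmI Hsplit Hk' kO' OMp'.
rewrite -Sv in EO.
split => //.
- move=> z Hz Hzw; move: E0 => /eqP; rewrite cards_eq0 => /eqP /setP /(_ z).
  by rewrite in_set0 in_set Hz Hzw /= => /negbFE.
- move=> z Hz Hzv.
  have HOs : O \subset S :\ v.
    by apply/subsetP => y; rewrite !inE => /andP [Hy /andP [Avy _]]; rewrite Hy andbT eq_sym neq_arc.
  have : O == S :\ v by rewrite eqEcard HOs EO.
  by move/eqP => ->; rewrite !inE Hz Hzv.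
- by exists z0.
Qed.

Lemma pure_out_false : False.
Proof.
have [h2 hn] := hfacts.
have OMp' := OMp; have kO' := kO; have Hk' := Hk; rewrite Sv in OMp'.
pose O' := [set w in O | A w v].
have HO' : #|O| <= #|O'| + #|Mm|.
  apply: leq_trans (leq_card_setU _ _); apply: subset_leq_card; apply/subsetP => w Hw.
  have := Hw; rewrite in_set => /andP [wS /andP [Avw _]].
  rewrite in_setU /O' in_set Hw /=; case Awv : (A w v) => //=.
  by rewrite in_set wS Awv eq_sym neq_arc.
have : 0 < #|O'| by lia.
case/card_gt0P => w1 Hw1.
have : 0 < #|O' :\ w1| by rewrite (cardsD1 w1 O') Hw1 in HO'; lia.
case/card_gt0P => w2; rewrite in_setD1 => /andP [N21 Hw2].
have inO' : forall w, (w \in O') = (w \in O) && A w v by move=> w; rewrite /O' in_set.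
move: Hw1 Hw2; rewrite !inO' => /andP [Hw1 Aw1v] /andP [Hw2 Aw2v].
have Hw1' : w1 \in O by [].
have Hw2' : w2 \in O by [].
have [Hk1 Hin1 Hfull [z0 Hz0 [Aw1z0 Hp0 N0]]] := per_w Hw1' Aw1v.
have [_ Hin2 _ _] := per_w Hw2' Aw2v.
have z0S : z0 \in S by move: Hz0; rewrite inE => /andP [].
have z0v : z0 != v by move: Hz0; rewrite inE => /and3P [].
have nA0 : ~~ A z0 v by move: Hz0; rewrite inE => /and3P [].
have Hz0O := Hfull z0 z0S z0v.
have N02 : z0 != w2 by apply: contraNneq nA0 => ->.
have Az02 := Hin2 z0 Hz0O N02.
have A21 := Hin1 w2 Hw2' N21.
have w2S : w2 \in S by move: Hw2'; rewrite inE => /andP [].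
have w1S : w1 \in S by move: Hw1'; rewrite inE => /andP [].
have N20 : w2 != z0 by rewrite eq_sym.
have N12 : w1 != w2 by rewrite eq_sym.
have E1 : C z0 w2 = C w2 v := F3 Hz0O w2S (neq_arc Aw2v) N20 Az02 Aw2v.
have E2 : C w2 w1 = C w1 v := F3 Hw2' w1S (neq_arc Aw1v) N12 A21 Aw1v.
have N10 : w1 != z0 by apply/eqP => E; move: nA0; rewrite -E Aw1v.
have vw1 : (v == w1) = false by rewrite eq_sym (negbTE (neq_arc Aw1v)).
case/or3P: (NR Aw1z0 Az02 A21 N10 N02 N21) => /eqP E.
- have := privP2 Hp0 w2S Hv Aw2v (etrans (esym E1) (esym E)).
  by rewrite (negbTE N21) vw1.
- have := privP2 Hk1 w2S Hv Aw2v (etrans (esym E1) (etrans E E2)).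
  by rewrite (negbTE N21) vw1.
- by move: N0; rewrite -E E2 eqxx.
Qed.

End Pure.


Lemma arithP h m p : 2 <= h -> h.+1 + m <= p -> p <= 1 -> False.
Proof. lia. Qed.

Section Mix.
Variables (V : finType) (A : rel V) (C : V -> V -> nat).
Hypothesis Hll : forall x, ~~ A x x.
Hypothesis NR : forall x y z, A x y -> A y z -> A z x -> x != y -> y != z -> z != x ->
  [|| C x y == C y z, C y z == C z x | C z x == C x y].
Variable S : {set V}.
Hypothesis Hn : 4 <= #|S|.
Hypothesis Hstar : forall x, x \in S -> (#|S| %/ 2).+1 + misS A S x <= pS A C S x.
Variable v : V.
Hypothesis Hv : v \in S.
Hypothesis Hmax : forall x, x \in S -> pS A C S x <= pS A C S v.

Let neqa a b : A a b -> a != b.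
Proof. by apply: contraTneq => ->; apply: Hll. Qed.

Lemma mixL (I O : {set V}) :
  (forall u, u \in I -> [/\ u \in S, A u v & C u v \in privS A C S v]) ->
  (forall w, w \in O -> [/\ w \in S, A v w & C v w \in privS A C S v]) ->
  (forall u w, u \in I -> w \in O -> C u v != C v w) ->
  pS A C S v <= #|I| + #|O| -> I != set0 -> O != set0 -> False.
Proof.
move=> HI HO HIO HpIO HI0 HO0.
have hf : 2 <= #|S| %/ 2 /\ #|S| <= (#|S| %/ 2).*2.+1 by lia.
case: hf => h2 hn.
have F1 u w : u \in I -> w \in O -> u != w -> ~~ A w u.
  move=> Hu Hw Nuw; apply/negP => Awu.
  have [uS Auv Hpu] := HI u Hu; have [wS Avw Hpw] := HO w Hw.
  case/or3P: (NR Auv Avw Awu (neqa Auv) (neqa Avw) (neqa Awu)) => /eqP E.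
  - by move: (HIO u w Hu Hw); rewrite E eqxx.
  - have := privP2 Hpw wS uS Awu (esym E).
    by rewrite eq_sym (negbTE (neqa Avw)) (negbTE (neqa Auv)).
  - have := privP2 Hpu wS uS Awu E.
    by rewrite eq_sym (negbTE (neqa Avw)) (negbTE (neqa Auv)).
have mI u : u \in I -> #|O :\ u| <= misI A S u.
  move=> Hu; apply: subset_leq_card; apply/subsetP => w; rewrite in_setD1 => /andP [Nwu Hw].
  have [wS _ _] := HO w Hw.
  by rewrite in_set wS Nwu; apply: F1 => //; rewrite eq_sym.
have mO w : w \in O -> #|I :\ w| <= misO A S w.
  move=> Hw; apply: subset_leq_card; apply/subsetP => u; rewrite in_setD1 => /andP [Nuw Hu].
  have [uS _ _] := HI u Hu.
  by rewrite in_set uS Nuw; apply: F1.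
have Hdisj y : y \in I -> y \in O -> False.
  move=> Hy Hy'.
  have [yS _ _] := HI y Hy.
  have h1 := Hstar yS; have h2' := Hmax yS; have h3 := mI y Hy; have h4 := mO y Hy'.
  have cI := cardsD1 y I; have cO := cardsD1 y O; rewrite Hy in cI; rewrite Hy' in cO.
  move: h1; rewrite /misS => h1; lia.
case/set0Pn: HI0 => u Hu; case/set0Pn: HO0 => w Hw.
have [uS _ _] := HI u Hu; have [wS _ _] := HO w Hw.
have Hu' : u \notin O by apply/negP => H; apply: (Hdisj u).
have Hw' : w \notin I by apply/negP => H; apply: (Hdisj w).
have E1 : #|O :\ u| = #|O|.
  by apply: eq_card => y; rewrite in_setD1; case: eqP => // ->; rewrite (negbTE Hu').
have E2 : #|I :\ w| = #|I|.
  by apply: eq_card => y; rewrite in_setD1; case: eqP => // ->; rewrite (negbTE Hw').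
have Hsz : #|I| + #|O| <= #|S :\ v|.
  apply: card_disj2 => //.
  - by apply/subsetP => y Hy; have [yS Ayv _] := HI y Hy; rewrite in_setD1 yS neqa.
  - by apply/subsetP => y Hy; have [yS Avy _] := HO y Hy; rewrite in_setD1 yS andbT eq_sym neqa.
have Sv : #|S :\ v| = #|S| - 1 by rewrite (cardsD1 v S) Hv add1n subSS subn0.
have h1 := Hstar uS; have h3 := Hmax uS; have h4 := mI u Hu.
have h5 := Hstar wS; have h6 := Hmax wS; have h7 := mO w Hw.
rewrite E1 in h4; rewrite E2 in h7; rewrite Sv in Hsz.
move: h1 h5; rewrite /misS => h1 h5; lia.
Qed.

Lemma purity : (forall u, u \in S -> A u v -> C u v \notin privS A C S v) \/
               (forall w, w \in S -> A v w -> C v w \notin privS A C S v).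
Proof.
have hf : 2 <= #|S| %/ 2 /\ #|S| <= (#|S| %/ 2).*2.+1 by lia.
case: hf => h2 hn.
case: (boolP [exists u in S, A u v && (C u v \in privS A C S v)]) => Hin; last first.
  by left => u Hu Auv; apply: contraNN Hin => Hp; apply/exists_inP; exists u; rewrite ?Auv.
case: (boolP [exists w in S, A v w && (C v w \in privS A C S v)]) => Hout; last first.
  by right => w Hw Avw; apply: contraNN Hout => Hp; apply/exists_inP; exists w; rewrite ?Avw.
exfalso.
case/exists_inP: Hin => u0 Hu0 /andP [Au0v Hp0].
case/exists_inP: Hout => w0 Hw0 /andP [Avw0 Hq0].
pose pin c := [exists u in S, A u v && (C u v == c)].
pose pout c := [exists w in S, A v w && (C v w == c)].
have [k [l [Hk Hpk Hl Hpl Nkl]]] : exists k l, [/\ k \in privS A C S v, pin k,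
    l \in privS A C S v, pout l & k != l].
  have Pi0 : pin (C u0 v) by apply/exists_inP; exists u0; rewrite ?Au0v ?eqxx.
  have Po0 : pout (C v w0) by apply/exists_inP; exists w0; rewrite ?Avw0 ?eqxx.
  case: (eqVneq (C u0 v) (C v w0)) => [E|N]; last by exists (C u0 v), (C v w0).
  have Hsz := Hstar Hv.
  have [c' Hc' Nc'] : exists2 c', c' \in privS A C S v & c' != C u0 v.
    case: (boolP (all (fun c => c == C u0 v) (privS A C S v))) => Hall.
      have : pS A C S v <= size [:: C u0 v].
        apply: pS_le => c Hc; move/allP: Hall => /(_ c Hc) /eqP ->; exact: mem_head.
      move=> /= H; case: (arithP h2 Hsz H).
    by move/allPn: Hall => [c' Hc' Nc']; exists c'.
  have [a [b [Ha Hb Hab Hcab /orP [/eqP Ea | /eqP Eb]]]] := privP1 Hc'.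
    subst a; exists (C u0 v), c'; split; [exact: Hp0 | exact: Pi0 | exact: Hc' | | by rewrite eq_sym].
    by apply/exists_inP; exists b; rewrite ?Hab ?Hcab ?eqxx.
  subst b; exists c', (C u0 v); split; [exact: Hc' | | exact: Hp0 | by rewrite E | exact: Nc'].
  by apply/exists_inP; exists a; rewrite ?Hab ?Hcab ?eqxx.
pose Q c := (c == k) || (pin c && ~~ pout c).
pose I := [set u in S | [&& A u v, C u v \in privS A C S v & Q (C u v)]].
pose O := [set w in S | [&& A v w, C v w \in privS A C S v & ~~ Q (C v w)]].
apply: (@mixL I O).
- by move=> u; rewrite in_set => /and4P [? ? ? _].
- by move=> w; rewrite in_set => /and4P [? ? ? _].
- move=> u w; rewrite !in_set => /and4P [_ _ _ Qu] /and4P [_ _ _ Qw].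
  by apply: contraNneq Qw => <-.
- rewrite !cardE -(size_map (fun u => C u v) (enum I)) -(size_map (fun w => C v w) (enum O)).
  rewrite -size_cat; apply: pS_le => c Hc; rewrite mem_cat.
  case Qc : (Q c).
    apply/orP; left.
    have [u Hu /andP [Auv /eqP Ec]] : exists2 u, u \in S & A u v && (C u v == c).
      move: Qc; rewrite /Q => /orP [/eqP Eck | /andP [Hpc _]].
        by subst c; apply/exists_inP.
      by apply/exists_inP.
    by apply/mapP; exists u; rewrite // mem_enum in_set Hu Auv Ec Hc Qc.
  apply/orP; right.
  case Po : (pout c).
    case/exists_inP: Po => w Hw /andP [Avw /eqP Ec].
    by apply/mapP; exists w; rewrite // mem_enum in_set Hw Avw Ec Hc Qc.
  have Pi : ~~ pin c by move: Qc; rewrite /Q Po andbT => /norP [_ ->].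
  have [a [b [Ha Hb Hab Hcab /orP [/eqP Ea | /eqP Eb]]]] := privP1 Hc.
    subst a; apply/mapP; exists b; last by rewrite Hcab.
    by rewrite mem_enum in_set Hb Hab Hcab Hc Qc.
  subst b; move: Pi => /exists_inPn /(_ a Ha); by rewrite Hab Hcab eqxx.
- apply/set0Pn; case/exists_inP: Hpk => u Hu /andP [Auv /eqP Ec].
  by exists u; rewrite in_set Hu Auv Ec Hk /Q eqxx.
- apply/set0Pn; case/exists_inP: Hpl => w Hw /andP [Avw /eqP Ec].
  exists w; rewrite in_set Hw Avw Ec Hl /= /Q negb_or eq_sym Nkl /=.
  rewrite negb_and negbK /pout; apply/orP; right; apply/exists_inP; exists w => //.
  by rewrite Avw Ec eqxx.
Qed.

End Mix.

Section Rev.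
Variables (V : finType) (A : rel V) (C : V -> V -> nat).
Definition Ar : rel V := fun x y => A y x.
Definition Cr : V -> V -> nat := fun x y => C y x.

Lemma privS_rev (S : {set V}) x : privS Ar Cr S x =i privS A C S x.
Proof.
move=> c; apply/idP/idP => Hc.
  have [a [b [Ha Hb Hab Hcab Hx]]] := privP1 Hc.
  apply: (@privI _ A C S x c b a) => // a' b' Ha' Hb' Hab' Hc'.
  by rewrite orbC; apply: (privP2 Hc Hb' Ha' Hab' Hc').
have [a [b [Ha Hb Hab Hcab Hx]]] := privP1 Hc.
apply: (@privI _ Ar Cr S x c b a) => //.
move=> a' b' Ha' Hb' Hab' Hc'.
by rewrite orbC; apply: (privP2 Hc Hb' Ha' Hab' Hc').
Qed.

Lemma pS_rev (S : {set V}) x : pS Ar Cr S x = pS A C S x.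
Proof. by apply: perm_size; apply: uniq_perm; rewrite ?uniq_privS //; apply: privS_rev. Qed.

Lemma misS_rev (S : {set V}) x : misS Ar S x = misS A S x.
Proof. by rewrite /misS /misO /misI addnC. Qed.
End Rev.

Theorem vertex_lemma (V : finType) (A : rel V) (C : V -> V -> nat)
  (Hll : forall x, ~~ A x x)
  (NR : forall x y z, A x y -> A y z -> A z x -> x != y -> y != z -> z != x ->
      [|| C x y == C y z, C y z == C z x | C z x == C x y])
  (S : {set V}) : 4 <= #|S| -> exists2 x, x \in S & pS A C S x <= #|S| %/ 2 + misS A S x.
Proof.
move=> Hn.
case: (boolP [exists x in S, pS A C S x <= #|S| %/ 2 + misS A S x]) => [/exists_inP [x Hx H]|Hno];
  first by exists x.
exfalso.
have Hstar : forall x, x \in S -> (#|S| %/ 2).+1 + misS A S x <= pS A C S x.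
  move=> x Hx; move/exists_inPn: Hno => /(_ x Hx); rewrite -ltnNge; lia.
have [x0 Hx0] : exists x0, x0 \in S by apply/set0Pn; rewrite -card_gt0; lia.
case: (@arg_maxnP V x0 (fun x => x \in S) (pS A C S) Hx0) => v Hv Hmax.
case: (purity Hll NR Hn Hstar Hv Hmax) => Hp.
  exact: (pure_out_false Hll NR Hn Hstar Hv Hp).
have Hll' : forall x, ~~ Ar A x x by move=> x; apply: Hll.
have NR' : forall x y z, Ar A x y -> Ar A y z -> Ar A z x -> x != y -> y != z -> z != x ->
    [|| Cr C x y == Cr C y z, Cr C y z == Cr C z x | Cr C z x == Cr C x y].
  move=> x y z Hxy Hyz Hzx Nxy Nyz Nzx; rewrite /Cr.
  have := @NR x z y Hzx Hyz Hxy.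
  rewrite (eq_sym x z) Nzx (eq_sym z y) Nyz (eq_sym y x) Nxy => /(_ isT isT isT).
  by case/or3P => /eqP ->; rewrite eqxx ?orbT.
apply: (@pure_out_false V (Ar A) (Cr C) Hll' NR' S Hn _ v Hv).
  by move=> x Hx; rewrite pS_rev misS_rev; apply: Hstar.
move=> u Hu Au; rewrite privS_rev; exact: Hp.
Qed.

Lemma mem_arcpairs n i j : ((i, j) \in arcpairs n) = [&& i < n, j < n & i != j].
Proof.
apply/flattenP/and3P.
  case=> s /mapP [k]; rewrite mem_iota add0n => /andP [_ Hk] -> /flattenP [t /mapP [l]].
  rewrite mem_iota add0n => /andP [_ Hl] -> ; rewrite !inE => /orP [] /eqP [-> ->].
    by split => //; [apply: ltn_trans Hk | rewrite ltn_eqF].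
  by split => //; [apply: ltn_trans Hk | rewrite gtn_eqF].
case=> Hi Hj Nij; case: (ltngtP i j) Nij => // [Hlt|Hgt] _.
  exists (flatten [seq [:: (i', j); (j, i')] | i' <- iota 0 j]).
    by apply/mapP; exists j => //; rewrite mem_iota add0n Hj.
  apply/flattenP; exists [:: (i, j); (j, i)]; last by rewrite mem_head.
  by apply/mapP; exists i => //; rewrite mem_iota add0n Hlt.
exists (flatten [seq [:: (i', i); (i, i')] | i' <- iota 0 i]).
  by apply/mapP; exists i => //; rewrite mem_iota add0n Hi.
apply/flattenP; exists [:: (j, i); (i, j)]; last by rewrite !inE eqxx orbT.
by apply/mapP; exists j => //; rewrite mem_iota add0n Hgt.
Qed.

Lemma mem_triples n i j k : (i, j, k) \in triples n -> [&& i < n, j < n & k < n].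
Proof.
case/flattenP => s /mapP [i' Hi' ->] /flattenP [t /mapP [j' Hj' ->]] /mapP [k' Hk'] [Ei Ej Ek].
subst; move: Hi' Hj' Hk'; rewrite !mem_iota !add0n.
by move=> /andP [_ ->] /andP [_ ->] /andP [_ ->].
Qed.

Definition ptr (col : seq (option nat)) : seq (option nat) :=
  [seq (if o is Some _ then Some (index o col) else None) | o <- col].

Lemma nth_ptr col i :
  nth None (ptr col) i = if nth None col i is Some c then Some (index (Some c) col) else None.
Proof.
case: (ltnP i (size col)) => Hi; first by rewrite /ptr (nth_map None) //; case: (nth None col i).
by rewrite !nth_default // size_map.
Qed.

Lemma validp_ptr col : validp (ptr col).
Proof.
apply/allP => i; rewrite mem_iota add0n size_map => /andP [_ Hi].
rewrite nth_ptr; case E: (nth None col i) => [c|] //.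
have Hin : Some c \in col by rewrite -E mem_nth.
have Hle : index (Some c) col <= i by rewrite -E index_nth.
by rewrite Hle /= nth_ptr (nth_index None Hin).
Qed.

Lemma count_ptr col : count isSome (ptr col) = count isSome col.
Proof. by rewrite /ptr count_map; apply: eq_count => [[c|]]. Qed.

Lemma roots_ptr col : size (roots (ptr col)) = size (undup (filter isSome col)).
Proof.
set R := roots (ptr col).
have HR r : r \in R -> exists c, nth None col r = Some c /\ index (Some c) col = r.
  rewrite mem_filter nth_ptr => /andP [].
  by case: (nth None col r) => [c|] // /eqP [<-] _; exists c.
have Hu : uniq [seq nth None col r | r <- R].
  rewrite map_inj_in_uniq; first by rewrite filter_uniq // iota_uniq.
  move=> r1 r2 H1 H2 E.
  have [c1 [E1 I1]] := HR r1 H1; have [c2 [E2 I2]] := HR r2 H2.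
  by rewrite -I1 -I2 -E1 -E2 E.
rewrite -(size_map (fun r => nth None col r)).
apply: perm_size; apply: uniq_perm => //; first by apply: undup_uniq.
move=> o; rewrite mem_undup mem_filter; apply/mapP/andP.
  case=> r Hr ->; have [c [E _]] := HR r Hr; rewrite E; split => //.
  rewrite -E mem_nth //; move: Hr; rewrite mem_filter mem_iota size_map add0n.
  by case/andP => _ /andP [].
case; case: o => [c|] // _ Hc; exists (index (Some c) col); last by rewrite (nth_index None Hc).
rewrite mem_filter mem_iota size_map add0n index_mem Hc andbT /=.
by rewrite nth_ptr (nth_index None Hc) eqxx leq0n.
Qed.

Lemma Fval_ptr col : Fval (ptr col) = count isSome col + size (undup (filter isSome col)).
Proof. by rewrite /Fval count_ptr roots_ptr. Qed.

Lemma b3_omap (f : nat -> nat) a b c :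
  b3 (omap f a) (omap f b) (omap f c) -> b3 a b c.
Proof.
case: a b c => [x|] [y|] [z|] //= /andP [/andP [H1 H2] H3].
apply/andP; split; [apply/andP; split|].
- by apply: contraNneq H1 => ->.
- by apply: contraNneq H2 => ->.
- by apply: contraNneq H3 => ->.
Qed.

Lemma rbf_ptr T col : rbf T col -> rbf T (ptr col).
Proof.
rewrite /rbf; apply: contra => /hasP [t Ht Hb]; apply/hasP; exists t => //.
move: Hb; rewrite /bad3 !nth_ptr => Hb.
apply: (@b3_omap (fun c => index (Some c) col)).
by move: Hb; case: (nth None col t.1.1); case: (nth None col t.1.2); case: (nth None col t.2).
Qed.

Section Conc.
Variables (V : finType) (A : rel V) (C : V -> V -> nat).
Hypothesis Hll : forall x, ~~ A x x.
Hypothesis NR : forall x y z, A x y -> A y z -> A z x -> x != y -> y != z -> z != x ->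
  [|| C x y == C y z, C y z == C z x | C z x == C x y].
Variable x0 : V.

Definition colv (sv : seq V) (n : nat) : seq (option nat) :=
  [seq (if A (nth x0 sv ij.1) (nth x0 sv ij.2) then Some (C (nth x0 sv ij.1) (nth x0 sv ij.2))
        else None) | ij <- arcpairs n].

Variables (S : {set V}) (sv : seq V) (n : nat).
Hypothesis Hsvu : uniq sv.
Hypothesis Hsvs : size sv = n.
Hypothesis Hsvm : forall y, (y \in sv) = (y \in S).
Hypothesis Hapu : uniq (arcpairs n).

Let P (ij : nat * nat) := A (nth x0 sv ij.1) (nth x0 sv ij.2).
Let g (ij : nat * nat) := (nth x0 sv ij.1, nth x0 sv ij.2).

Let pair_of a b : a \in S -> b \in S -> A a b ->
  [/\ (index a sv, index b sv) \in arcpairs n, nth x0 sv (index a sv) = a & nth x0 sv (index b sv) = b].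
Proof.
move=> Ha Hb Hab; rewrite -Hsvm in Ha; rewrite -Hsvm in Hb.
rewrite (nth_index x0 Ha) (nth_index x0 Hb); split => //.
rewrite mem_arcpairs -Hsvs !index_mem Ha Hb /=.
apply: contraTneq Hab => E.
by rewrite -(nth_index x0 Ha) E (nth_index x0 Hb) (negbTE (Hll b)).
Qed.

Lemma count_colv : count isSome (colv sv n) = #|arcsS A S|.
Proof.
rewrite /colv count_map.
have -> : count (preim (fun ij : nat * nat => if A (nth x0 sv ij.1) (nth x0 sv ij.2)
          then Some (C (nth x0 sv ij.1) (nth x0 sv ij.2)) else None) isSome) (arcpairs n)
          = count P (arcpairs n).
  by apply: eq_count => ij /=; rewrite /P; case: (A _ _).
rewrite -size_filter -(size_map g).
have Hu : uniq (map g (filter P (arcpairs n))).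
  rewrite map_inj_in_uniq; first by rewrite filter_uniq.
  move=> [i j] [k l]; rewrite !mem_filter !mem_arcpairs => /andP [_ /and3P [Hi Hj _]]
    /andP [_ /and3P [Hk Hl _]] [E1 E2].
  rewrite -Hsvs in Hi Hj Hk Hl.
  move/eqP: E1; rewrite (nth_uniq x0 Hi Hk Hsvu) => /eqP ->.
  by move/eqP: E2; rewrite (nth_uniq x0 Hj Hl Hsvu) => /eqP ->.
have He : arcsS A S =i map g (filter P (arcpairs n)).
  move=> [a b]; rewrite in_arcsS; apply/and3P/mapP.
    case=> Ha Hb Hab; have [H1 H2 H3] := pair_of Ha Hb Hab.
    exists (index a sv, index b sv); last by rewrite /g /= H2 H3.
    by rewrite mem_filter /P /= H2 H3 Hab.
  case=> [[i j]]; rewrite mem_filter mem_arcpairs /P /g /= => /andP [Hab /and3P [Hi Hj _]] [-> ->].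
  by rewrite -!Hsvm !mem_nth ?Hsvs.
by rewrite (eq_card He); symmetry; apply/card_uniqP.
Qed.

Lemma colors_colv : size (undup (filter isSome (colv sv n))) = size (colS A C S).
Proof.
rewrite -(size_map Some (colS A C S)); apply: perm_size; apply: uniq_perm; first by apply: undup_uniq.
  by rewrite map_inj_uniq ?undup_uniq //; move=> ? ? [].
move=> o; rewrite mem_undup mem_filter; apply/andP/mapP.
  case; case: o => [c|] // _ /mapP [[i j] Hij].
  rewrite mem_arcpairs /= in Hij; case/and3P: Hij => Hi Hj _.
  case E: (A (nth x0 sv i) (nth x0 sv j)); last by [].
  move=> [Ec].
  exists (C (nth x0 sv i) (nth x0 sv j)); last by rewrite Ec.
  apply/colSP; exists (nth x0 sv i), (nth x0 sv j).
  by rewrite -!Hsvm !mem_nth ?Hsvs.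
case=> c /colSP [a [b [Ha Hb Hab Hc]]] ->; split => //.
have [H1 H2 H3] := pair_of Ha Hb Hab.
by apply/mapP; exists (index a sv, index b sv) => //=; rewrite H2 H3 Hab Hc.
Qed.

Lemma rbf_colv : rbf (tris n) (colv sv n).
Proof.
apply/hasPn => t /mapP [[[i j] k]]; rewrite mem_filter /= => /andP [/andP [/andP [Nij Njk] Nki] Ht] ->.
have [Hi Hj Hk] : [/\ i < n, j < n & k < n] by apply/and3P; apply: mem_triples Ht.
have Hm a b : a < n -> b < n -> a != b ->
    nth None (colv sv n) (index (a, b) (arcpairs n)) =
    if A (nth x0 sv a) (nth x0 sv b) then Some (C (nth x0 sv a) (nth x0 sv b)) else None.
  move=> Ha Hb Nab; have Hin : (a, b) \in arcpairs n by rewrite mem_arcpairs Ha Hb Nab.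
  by rewrite /colv (nth_map (0, 0)) ?index_mem // nth_index.
rewrite /bad3 /= (Hm i j) // (Hm j k) // (Hm k i) //.
set a := nth x0 sv i; set b := nth x0 sv j; set c := nth x0 sv k.
have Hd u w : u < n -> w < n -> u != w -> nth x0 sv u != nth x0 sv w.
  by move=> Hu Hw; rewrite -Hsvs in Hu Hw; rewrite (nth_uniq x0 Hu Hw Hsvu).
case Hab : (A a b) => //; case Hbc : (A b c) => //; case Hca : (A c a) => //=.
have := NR Hab Hbc Hca (Hd _ _ Hi Hj Nij) (Hd _ _ Hj Hk Njk) (Hd _ _ Hk Hi Nki).
by case/or3P => /eqP ->; rewrite eqxx ?andbF.
Qed.

End Conc.

Lemma ptr_take (c r : seq (option nat)) : take (size c) (ptr (c ++ r)) = ptr c.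
Proof.
rewrite /ptr map_cat -(size_map (fun o : option nat => if o is Some _ then Some (index o (c ++ r)) else None) c).
rewrite take_size_cat // ; apply/eq_in_map => o Ho.
by case: o Ho => [k|] // Ho; rewrite index_cat Ho.
Qed.

Lemma colv_prefix (V : finType) (A : rel V) (C : V -> V -> nat) (x0 : V) (sv4 : seq V) x :
  size sv4 = 4 -> take 12 (ptr (colv A C x0 (sv4 ++ [:: x]) 5)) = ptr (colv A C x0 sv4 4).
Proof.
move=> Hs.
have EAP : arcpairs 5 = arcpairs 4 ++ drop 12 (arcpairs 5) by vm_compute.
have [r Er] : exists r, colv A C x0 (sv4 ++ [:: x]) 5 = colv A C x0 sv4 4 ++ r.
  eexists; rewrite /colv {1}EAP map_cat; congr (_ ++ _).
  apply/eq_in_map => [[i j]]; rewrite mem_arcpairs /= => /and3P [Hi Hj _].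
  by rewrite !nth_cat Hs Hi Hj.
have Hsz : size (colv A C x0 sv4 4) = 12 by rewrite size_map.
by rewrite Er -{1}Hsz ptr_take.
Qed.

Section Bounds.
Variables (V : finType) (A : rel V) (C : V -> V -> nat).
Hypothesis Hll : forall x, ~~ A x x.
Hypothesis NR : forall x y z, A x y -> A y z -> A z x -> x != y -> y != z -> z != x ->
  [|| C x y == C y z, C y z == C z x | C z x == C x y].

Lemma Fv_conc (S : {set V}) sv n x0 : uniq sv -> size sv = n ->
  (forall y, (y \in sv) = (y \in S)) -> uniq (arcpairs n) ->
  Fval (ptr (colv A C x0 sv n)) = Fv A C S.
Proof.
by move=> H1 H2 H3 H4; rewrite Fval_ptr (count_colv C Hll x0 H1 H2 H3 H4) (colors_colv C Hll x0 H2 H3).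
Qed.

Lemma base3 (S : {set V}) : #|S| = 3 -> Fv A C S <= 10.
Proof.
move=> H3; rewrite leqNgt; apply/negP => H.
have [x0 _] : exists x0, x0 \in S by apply/set0Pn; rewrite -card_gt0 H3.
pose sv := enum S.
have Hu : uniq sv by apply: enum_uniq.
have Hs : size sv = 3 by rewrite -H3 cardE.
have Hm : forall y, (y \in sv) = (y \in S) by move=> y; rewrite mem_enum.
have Hap : uniq (arcpairs 3) by vm_compute.
pose q := ptr (colv A C x0 sv 3).
have Hq : q \in ext T3 11 6 (take 0 q).
  apply: ext_complete.
  - exact: validp_ptr.
  - by rewrite T3E; apply: rbf_ptr; apply: rbf_colv.
  - by rewrite (Fv_conc x0 Hu Hs Hm Hap).
  - by rewrite /q size_map size_map.
by rewrite take0 c3 in Hq.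
Qed.

Lemma step (S : {set V}) : 4 <= #|S| ->
  exists2 x, x \in S & Fv A C S <= Fv A C (S :\ x) + (#|S| - 1).*2 + #|S| %/ 2.
Proof.
move=> Hn; have [x Hx Hp] := vertex_lemma Hll NR Hn.
exists x => //.
have H1 := Fv_del A C Hx; have H2 := deg_mis Hll Hx; lia.
Qed.

Lemma base5 (S : {set V}) : #|S| = 5 -> Fv A C S <= 27.
Proof.
move=> H5; rewrite leqNgt; apply/negP => H.
have [x Hx Hst] : exists2 x, x \in S & Fv A C S <= Fv A C (S :\ x) + (#|S| - 1).*2 + #|S| %/ 2.
  by apply: step; rewrite H5.
rewrite H5 in Hst.
have H18 : 18 <= Fv A C (S :\ x) by lia.
pose sv4 := enum (S :\ x).
have Hu4 : uniq sv4 by apply: enum_uniq.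
have Hsx : #|S :\ x| = 4 by move: H5; rewrite (cardsD1 x S) Hx; lia.
have Hs4 : size sv4 = 4 by rewrite -cardE.
have Hm4 : forall y, (y \in sv4) = (y \in S :\ x) by move=> y; rewrite mem_enum.
pose sv5 := sv4 ++ [:: x].
have Hu5 : uniq sv5 by rewrite cat_uniq Hu4 /= andbT orbF Hm4 in_setD1 eqxx.
have Hs5 : size sv5 = 5 by rewrite size_cat Hs4.
have Hm5 : forall y, (y \in sv5) = (y \in S).
  move=> y; rewrite mem_cat Hm4 in_setD1 mem_seq1.
  by case: (eqVneq y x) => [->|] /=; rewrite ?Hx ?orbF.
have Hap4 : uniq (arcpairs 4) by vm_compute.
have Hap5 : uniq (arcpairs 5) by vm_compute.
pose q4 := ptr (colv A C x sv4 4).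
pose q5 := ptr (colv A C x sv5 5).
have Hq4 : q4 \in ext T4 18 12 (take 0 q4).
  apply: ext_complete.
  - exact: validp_ptr.
  - by rewrite T4E; apply: rbf_ptr; apply: rbf_colv.
  - by rewrite (Fv_conc x Hu4 Hs4 Hm4 Hap4).
  - by rewrite /q4 size_map size_map.
have Hq5 : q5 \in ext T5 28 8 (take 12 q5).
  apply: ext_complete.
  - exact: validp_ptr.
  - by rewrite T5E; apply: rbf_ptr; apply: rbf_colv.
  - by rewrite (Fv_conc x Hu5 Hs5 Hm5 Hap5).
  - by rewrite /q5 size_map size_map.
rewrite take0 in Hq4.
have Ht : take 12 q5 = q4 by rewrite /q5 /sv5 colv_prefix.
rewrite Ht in Hq5.
have := c5; move/allP => /(_ q4 Hq4) /eqP E.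
by rewrite E in Hq5.
Qed.

Definition Gp (n : nat) := n * (n - 1) + n * n %/ 4 + 2.

Lemma Gp_step n : 3 <= n -> Gp n + n.*2 + n.+1 %/ 2 = Gp n.+1.
Proof. rewrite /Gp => Hn; nia. Qed.

Lemma bound_all n : forall (S : {set V}), #|S| = n -> 3 <= n -> Fv A C S <= Gp n.
Proof.
elim: n => [|n IH] S HS Hn; first by [].
case: (ltngtP n 2) => [Hlt|Hgt|E]; first by lia.
  have H4 : 4 <= #|S| by rewrite HS.
  have [x Hx Hst] := step H4.
  have Hsx : #|S :\ x| = n by move: HS; rewrite (cardsD1 x S) Hx; lia.
  have H1 := IH (S :\ x) Hsx Hgt.
  have H2 := Gp_step Hgt.
  rewrite HS in Hst; lia.
subst n; by apply: leq_trans (base3 HS) _.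
Qed.

Lemma bound5 n : forall (S : {set V}), #|S| = n -> 5 <= n -> Fv A C S <= Gp n - 1.
Proof.
elim: n => [|n IH] S HS Hn; first by [].
case: (ltngtP n 4) => [Hlt|Hgt|E]; first by lia.
  have H4 : 4 <= #|S| by rewrite HS; lia.
  have [x Hx Hst] := step H4.
  have Hsx : #|S :\ x| = n by move: HS; rewrite (cardsD1 x S) Hx; lia.
  have H1 := IH (S :\ x) Hsx Hgt.
  have H2 := Gp_step (ltnW (ltnW Hgt)).
  have H3 : 1 <= Gp n by rewrite /Gp addn2.
  rewrite HS in Hst; lia.
subst n; by apply: leq_trans (base5 HS) _.
Qed.

End Bounds.

Unset Implicit Arguments.

Theorem theorem3 (V : finType) (A : rel V) (C : V -> V -> nat) :
  loopless A -> 3 <= #|V| ->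
  bound3 #|V| <= num_arcs A + num_colors A C ->
  rainbow_triangle A C.
Proof.
move=> Hll Hn Hb.
case: (boolP [exists x, [exists y, [exists z, [&& [&& x != y, y != z & z != x],
    [&& A x y, A y z & A z x] & [&& C x y != C y z, C y z != C z x & C z x != C x y]]]]]) => Hrb.
  case/existsP: Hrb => x /existsP [y /existsP [z /and3P [/and3P [? ? ?] /and3P [? ? ?] /and3P [? ? ?]]]].
  by exists x, y, z.
exfalso.
have NR : forall x y z, A x y -> A y z -> A z x -> x != y -> y != z -> z != x ->
    [|| C x y == C y z, C y z == C z x | C z x == C x y].
  move=> x y z Axy Ayz Azx Nxy Nyz Nzx.
  apply/negPn; apply/negP => Hn3; move/negP: Hrb; apply.
  apply/existsP; exists x; apply/existsP; exists y; apply/existsP; exists z.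
  by rewrite Nxy Nyz Nzx Axy Ayz Azx /= -!negb_or.
have Earcs : arcsS A [set: V] = arcs A.
  by apply/setP => [[a b]]; rewrite !inE.
have EF : Fv A C [set: V] = num_arcs A + num_colors A C.
  by rewrite /Fv /colS Earcs.
move: Hb; rewrite -EF /bound3 -cardsT => Hb.
have Hn' : 3 <= #|[set: V]| by rewrite cardsT.
case: (leqP #|[set: V]| 4) => H4.
  have := bound_all Hll NR (erefl _) Hn'.
  rewrite H4 /Gp in Hb *.
  set t := #|[set: V]| * (#|[set: V]| - 1) + #|[set: V]| * #|[set: V]| %/ 4 in Hb *.
  lia.
have := bound5 Hll NR (erefl _) H4.
move: Hb; rewrite (leqNgt #|[set: V]| 4) H4 /= => Hb.
rewrite /Gp in Hb *.
set t := #|[set: V]| * (#|[set: V]| - 1) + #|[set: V]| * #|[set: V]| %/ 4 in Hb *.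
lia.
Qed.
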